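(* Let $A$ and $B$ be two $n\times n$ generalized tournament matrices with the same principal minors of orders at most $4$, and let $\alpha>1/2$. Then $A$ is $\alpha$-separable if and only if $B$ is $\alpha$-separable.
   Context: A generalized tournament matrix of order $n$ is a real $n\times n$ matrix $M=(m_{ij})$ with nonnegative entries satisfying $M+M^{t}=J_n-I_n$. Write $[n]=\{1,\ldots,n\}$. For $\alpha>1/2$, $M$ is $\alpha$-separable if there is a partition of $[n]$ into two nonempty sets $X,Y$ such that $m_{xy}=\alpha$ for all $x\in X$, $y\in Y$. *)

(* Defs.v *)
From HB Require Import structures.
From mathcomp Require Import all_boot all_order all_algebra.
Set Implicit Arguments. Unset Strict Implicit. Unset Printing Implicit Defensive.
Import Order.TTheory GRing.Theory Num.Theory.
Local Open Scope ring_scope.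

Definition gen_tournament (R : realFieldType) (n : nat) (M : 'M[R]_n) : Prop :=
  (forall i j, 0 <= M i j) /\
  (forall i j, M i j + M j i = if i == j then 0 else 1).

Definition principal_submx (R : realFieldType) (n : nat) (M : 'M[R]_n)
  (S : {set 'I_n}) : 'M[R]_#|S| :=
  \matrix_(i < #|S|, j < #|S|) M (enum_val i) (enum_val j).

Definition principal_minor (R : realFieldType) (n : nat) (M : 'M[R]_n)
  (S : {set 'I_n}) : R := \det (principal_submx M S).

Definition separable (R : realFieldType) (n : nat) (alpha : R) (M : 'M[R]_n)
  : Prop :=
  exists X : {set 'I_n}, X != set0 /\ ~: X != set0 /\
    (forall x y, x \in X -> y \in ~: X -> M x y = alpha).

(* Main.v *)
Require Import Defs.
From HB Require Import structures.
From mathcomp Require Import all_boot all_order all_algebra.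
From mathcomp Require Import ring lra.
Import Order.TTheory GRing.Theory Num.Theory.
Local Open Scope ring_scope.
Lemma det3 (R : comNzRingType) (M : 'M[R]_3) : \det M =
  M 0 0 * M 1 1 * M 2 2 - M 0 0 * M 1 2 * M 2 1 - M 0 1 * M 1 0 * M 2 2
  + M 0 1 * M 1 2 * M 2 0 + M 0 2 * M 1 0 * M 2 1 - M 0 2 * M 1 1 * M 2 0.
Proof.
pose g := fun a b : nat => M (inord a) (inord b).
have eM : M = \matrix_(a,b) g a b by apply/matrixP=> a b; rewrite mxE /g !inord_val.
rewrite eM (expand_det_row _ 0) !big_ord_recl big_ord0 /cofactor.
rewrite !(expand_det_row _ 0) !big_ord_recl !big_ord0 /cofactor !det_mx11 !mxE /=.
rewrite /g /=. ring.
Qed.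
Lemma det2 (R : comNzRingType) (M : 'M[R]_2) : \det M =
  M 0 0 * M 1 1 - M 0 1 * M 1 0.
Proof.
pose g := fun a b : nat => M (inord a) (inord b).
have eM : M = \matrix_(a,b) g a b by apply/matrixP=> a b; rewrite mxE /g !inord_val.
rewrite eM (expand_det_row _ 0) !big_ord_recl big_ord0 /cofactor !det_mx11 !mxE /=.
rewrite /g /=. ring.
Qed.
Lemma pm3 (R : realFieldType) n (M : 'M[R]_n) i j k : i != j -> j != k -> i != k ->
  (forall l, M l l = 0) ->
  principal_minor M [set i; j; k] = M i j * M j k * M k i + M i k * M k j * M j i.
Proof.
move=> ij jk ik d.
rewrite /principal_minor /principal_submx.
have cS : #|[set i; j; k]| = 3%N.
  have -> : [set i; j; k] = i |: [set j; k] by apply/setP=> x; rewrite !inE orbA.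
  by rewrite cardsU1 cards2 !inE negb_or ij ik jk.
have key : forall m (g : 'I_m -> 'I_n), m = 3%N -> injective g ->
    (forall a, g a \in [set i;j;k]) ->
    \det (\matrix_(a, b) M (g a) (g b)) = M i j * M j k * M k i + M i k * M k j * M j i.
  move=> m g em ginj gS; subst m; rewrite det3 !mxE !d.
  have h01 : g 0 != g 1 by rewrite (inj_eq ginj).
  have h02 : g 0 != g 2 by rewrite (inj_eq ginj).
  have h12 : g 1 != g 2 by rewrite (inj_eq ginj).
  move: (gS 0) (gS 1) (gS 2) h01 h02 h12; move: (g 0) (g 1) (g 2) => a b c.
  have H3 : forall x, x \in [set i;j;k] -> [\/ x = i, x = j | x = k].
    by move=> x; rewrite !inE => /orP[/orP[]|] /eqP ->; [constructor 1|constructor 2|constructor 3].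
  by do 3! case/H3=> ->; rewrite ?eqxx //= => _ _ _; ring.
exact: key cS (@enum_val_inj _ _) (@enum_valP _ _).
Qed.
Lemma pm2 (R : realFieldType) n (M : 'M[R]_n) i j : i != j ->
  (forall l, M l l = 0) ->
  principal_minor M [set i; j] = - (M i j * M j i).
Proof.
move=> ij d.
rewrite /principal_minor /principal_submx.
have cS : #|[set i; j]| = 2%N by rewrite cards2 ij.
have key : forall m (g : 'I_m -> 'I_n), m = 2%N -> injective g ->
    (forall a, g a \in [set i;j]) ->
    \det (\matrix_(a, b) M (g a) (g b)) = - (M i j * M j i).
  move=> m g em ginj gS; subst m; rewrite det2 !mxE !d.
  have h01 : g 0 != g 1 by rewrite (inj_eq ginj).
  move: (gS 0) (gS 1) h01; move: (g 0) (g 1) => a b.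
  rewrite !inE.
  by do 2! case/orP=> /eqP->; rewrite ?eqxx //= => _; ring.
exact: key cS (@enum_val_inj _ _) (@enum_valP _ _).
Qed.

Lemma card3 (n : nat) (i j k : 'I_n) : i != j -> j != k -> i != k ->
  #|[set i; j; k]| = 3%N.
Proof.
move=> ij jk ik.
have -> : [set i; j; k] = i |: [set j; k] by apply/setP=> x; rewrite !inE orbA.
by rewrite cardsU1 cards2 !inE negb_or ij ik jk.
Qed.

Lemma gt_diag {R : realFieldType} {n} {M : 'M[R]_n} : gen_tournament M ->
  forall l, M l l = 0.
Proof.
case=> h1 h2 l; have := h2 l l; rewrite eqxx; have := h1 l l; lra.
Qed.

Lemma gt_opp {R : realFieldType} {n} {M : 'M[R]_n} (g : gen_tournament M)
  {i j : 'I_n} (ij : i != j) : M j i = 1 - M i j.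
Proof.
case: g => h1 h2; have := h2 i j; rewrite (negbTE ij); lra.
Qed.

Section Main.
Variables (R : realFieldType) (n : nat) (A B : 'M[R]_n) (alpha : R).
Hypotheses (gA : gen_tournament A) (gB : gen_tournament B)
  (hm : forall S : {set 'I_n}, (#|S| <= 4)%N -> principal_minor A S = principal_minor B S)
  (ha : 1 / 2 < alpha).

Lemma ha2 : 1 < alpha * 2.
Proof. by rewrite -ltr_pdivrMr ?ltr0n. Qed.

Lemma F0 x y : x != y -> A x y = alpha -> B x y = alpha \/ B y x = alpha.
Proof.
move=> xy hA.
have := hm [set x; y]; rewrite cards2 xy => /(_ isT).
rewrite !pm2 //; try exact: gt_diag. move=> e; move: e; rewrite (gt_opp gA xy) (gt_opp gB xy) hA => e.
have h : (B x y - alpha) * (B x y - (1 - alpha)) = 0.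
  have -> : (B x y - alpha) * (B x y - (1 - alpha)) =
     (- (B x y * (1 - B x y))) - (- (alpha * (1 - alpha))) by ring.
  by rewrite -e subrr.
move/eqP: h; rewrite mulf_eq0 !subr_eq0 => /orP[/eqP -> | /eqP ->]; [left | right] => //.
ring.
Qed.

Lemma T3 i j k : i != j -> j != k -> i != k ->
  (A i j = alpha /\ A i k = alpha) \/ (A j i = alpha /\ A k i = alpha) ->
  B j i = alpha -> B i k = alpha -> B j k = alpha.
Proof.
move=> ij jk ik hA hBji hBik.
have := hm [set i; j; k]; rewrite card3 // => /(_ isT).
rewrite !pm3 //; try exact: gt_diag.
have ji : j != i by rewrite eq_sym.
have ki : k != i by rewrite eq_sym.
have kj : k != j by rewrite eq_sym.
have EA : A i j * A j k * A k i + A i k * A k j * A j i = alpha * (1 - alpha).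
  case: hA => [[h1 h2] | [h1 h2]].
    rewrite (gt_opp gA ik) (gt_opp gA jk) (gt_opp gA ij) h1 h2; ring.
  rewrite (gt_opp gA ki) (gt_opp gA ji) (gt_opp gA jk) h1 h2; ring.
rewrite EA (gt_opp gB ik) (gt_opp gB jk) (gt_opp gB ji) hBji hBik => e.
move/eqP: e; rewrite -subr_eq0 => /eqP e.
have h : (B j k - alpha) * (1 - 2 * alpha) = 0 by rewrite -oppr0 -e; ring.
move/eqP: h; rewrite mulf_eq0 subr_eq0 => /orP[/eqP // | h].
exfalso; move: h; rewrite subr_eq0 => /eqP; move=> h; have := ha2; lra.
Qed.

Lemma dir : separable alpha A -> separable alpha B.
Proof.
move=> [X [X0 [Y0 hX]]].
have neqXY : forall x y, x \in X -> y \notin X -> x != y.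
  by move=> x y xX yX; apply/eqP => e; subst; rewrite xX in yX.
have hX' : forall x y, x \in X -> y \notin X -> A x y = alpha.
  by move=> x y xX yX; apply: hX; rewrite // inE.
have F0' : forall x y, x \in X -> y \notin X -> B x y = alpha \/ B y x = alpha.
  by move=> x y xX yX; apply: F0; [apply: neqXY | apply: hX'].
have T1 : forall x u v, x \in X -> u \notin X -> v \notin X -> u != v ->
    B u x = alpha -> B x v = alpha -> B u v = alpha.
  move=> x u v xX uX vX uv h1 h2; apply: (@T3 x u v) => //; try by apply: neqXY.
  by left; split; apply: hX'.
have T2 : forall y u v, y \notin X -> u \in X -> v \in X -> u != v ->
    B u y = alpha -> B y v = alpha -> B u v = alpha.
  move=> y u v yX uX vX uv h1 h2; apply: (@T3 y u v) => //;
    try by rewrite eq_sym; apply: neqXY.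
  by right; split; apply: hX'.
have noboth : forall u v, u != v -> B u v = alpha -> B v u = alpha -> False.
  move=> u v uv h1; rewrite (gt_opp gB uv) h1; have := ha2; lra.
case/set0Pn: X0 => x0 x0X.
pose N x := [set y | (y \notin X) && (B x y == alpha)].
case: (@arg_maxnP _ x0 (mem X) (fun x => #|N x|) x0X) => xm xmX xmmax.
have {}xmX : xm \in X by [].
have {}xmmax : forall x, x \in X -> (#|N x| <= #|N xm|)%N by [].

case: (boolP [forall y, (y \notin X) ==> (B xm y == alpha)]) => [/forallP hall | /forallPn [y0]].
- exists [set x in X | [forall y, (y \notin X) ==> (B x y == alpha)]]; split.
    by apply/set0Pn; exists xm; rewrite inE xmX; apply/forallP.
  split.
    case/set0Pn: Y0 => y; rewrite inE => yY.
    by apply/set0Pn; exists y; rewrite !inE (negbTE yY).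
  move=> u v; rewrite !inE => /andP[uX /forallP hu] hv.
  case: (boolP (v \in X)) => vX; last by apply/eqP; exact: (implyP (hu v) vX).
  rewrite vX /= in hv; move/forallPn: hv => [y]; rewrite negb_imply => /andP[yX hy].
  have hvy : B y v = alpha.
    by case: (F0' v y vX yX) => // e; rewrite e eqxx in hy.
  have huy : B u y = alpha by apply/eqP; exact: (implyP (hu y) yX).
  apply: (T2 y u v yX uX vX _ huy hvy).
  by apply/eqP => e; subst; rewrite huy eqxx in hy.
- rewrite negb_imply => /andP[y0X hy0].
  have y0in : forall x, x \in X -> B y0 x = alpha.
    move=> x xX; case: (F0' x y0 xX y0X) => // hxy0; exfalso.
    have : ~~ (N xm \subset N x).
      apply/negP => sub.
      have : N xm \proper N x.
        apply/properP; split => //; exists y0; rewrite !inE y0X ?hxy0 ?eqxx //=.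
      by move/proper_card; rewrite ltnNge (xmmax x xX).
    case/subsetPn => y1; rewrite !inE => /andP[y1X /eqP h1].
    rewrite y1X /= => h2.
    have hy1x : B y1 x = alpha.
      by case: (F0' x y1 xX y1X) => // e; rewrite e eqxx in h2.
    have hy0xm : B y0 xm = alpha.
      by case: (F0' xm y0 xmX y0X) => // e; rewrite e eqxx in hy0.
    have y10 : y1 != y0.
      by apply/eqP => e; subst; rewrite h1 eqxx in hy0.
    have e1 := T1 x y1 y0 xX y1X y0X y10 hy1x hxy0.
    have e2 := T1 xm y0 y1 xmX y0X y1X _ hy0xm h1.
    by apply: (noboth _ _ y10 e1); apply: e2; rewrite eq_sym.
  exists [set y | (y \notin X) && [forall x, (x \in X) ==> (B y x == alpha)]]; split.
    apply/set0Pn; exists y0; rewrite inE y0X /=; apply/forallP => x.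
    by apply/implyP => xX; rewrite y0in.
  split.
    by apply/set0Pn; exists x0; rewrite !inE x0X.
  move=> u v; rewrite !inE => /andP[uX /forallP hu] hv.
  case: (boolP (v \in X)) => vX; first by apply/eqP; exact: (implyP (hu v) vX).
  rewrite vX /= in hv; move/forallPn: hv => [x]; rewrite negb_imply => /andP[xX hx].
  have hxv : B x v = alpha.
    by case: (F0' x v xX vX) => // e; rewrite e eqxx in hx.
  have hux : B u x = alpha by apply/eqP; exact: (implyP (hu x) xX).
  apply: (T1 x u v xX uX vX _ hux hxv).
  by apply/eqP => e; subst; rewrite hux eqxx in hx.
Qed.

End Main.

Theorem corollary5p6 (R : realFieldType) (n : nat) (A B : 'M[R]_n) (alpha : R) :
  gen_tournament A -> gen_tournament B ->
  (forall S : {set 'I_n}, (#|S| <= 4)%N -> principal_minor A S = principal_minor B S) ->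
  1 / 2 < alpha ->
  (separable alpha A <-> separable alpha B).
Proof.
move=> gA gB hm ha; split; first exact: dir.
by apply: dir => // S hS; rewrite hm.
Qed.
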